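(* Let $\Gamma=(M,E)$ be a reaction network with stoichiometric matrix $\mathbb S$ and $n=\dim\ker\mathbb S^T\ge0$. Then $\Gamma$ is nondegenerate if and only if there exists an invertible $(|M|-n)\times(|M|-n)$ Child-Selection matrix of $\Gamma$.
   Context: Reaction $j$ is $\sum_m s^j_m\mathsf m\to\sum_m\tilde s^j_m\mathsf m$ with $s^j_m,\tilde s^j_m\ge0$; $\mathbb S_{mj}=\tilde s^j_m-s^j_m$. A reactivity matrix is an $|E|\times|M|$ matrix $R$ with $R_{jm}>0$ if $s^j_m>0$ and $R_{jm}=0$ otherwise; the symbolic Jacobian is $G=\mathbb S R$. $\Gamma$ is nondegenerate if for some reactivity matrix $R$, $\mathbb S R$ has a nonzero $(|M|-n)\times(|M|-n)$ principal minor. A $k$-Child-Selection ($k$-CS) is a triple $\boldsymbol\kappa=(\kappa,E_\kappa,J)$ with $\kappa\subseteq M$, $E_\kappa\subseteq E$, $|\kappa|=|E_\kappa|=k$, and $J:\kappa\to E_\kappa$ a bijection with $s^{J(m)}_m>0$ for all $m\in\kappa$ (each species is a reactant of its assigned reaction). Its CS-matrix is the $k\times k$ matrix $\mathbb S[\boldsymbol\kappa]_{ml}=\mathbb S_{m,J(l)}$, $m,l\in\kappa$. *)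

(* Defs.v *)
From mathcomp Require Import all_boot all_order all_algebra.
From mathcomp Require Import reals.
Set Implicit Arguments. Unset Strict Implicit. Unset Printing Implicit Defensive.
Import Order.TTheory GRing.Theory Num.Theory.
Local Open Scope ring_scope.

(* A reaction network with species M = 'I_m and reactions E = 'I_e is given
   by the reactant coefficients s (s i j = s^j_i) and product coefficients
   st (st i j = tilde s^j_i), both m x e matrices with nonnegative entries. *)
Definition network_coeffs (R : realType) (m e : nat) (s st : 'M[R]_(m, e)) :=
  forall i j, 0 <= s i j /\ 0 <= st i j.

Definition stoich (R : realType) (m e : nat) (s st : 'M[R]_(m, e)) : 'M[R]_(m, e) :=
  st - s.

(* n = dim ker S^T ; ker S^T = { u : u *m S = 0 } = row kernel of S *)
Definition nconserv (R : realType) (m e : nat) (s st : 'M[R]_(m, e)) : nat :=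
  \rank (kermx (stoich s st)).

Definition reactivity (R : realType) (m e : nat) (s : 'M[R]_(m, e))
  (Rm : 'M[R]_(e, m)) : Prop :=
  forall j i, (0 < s i j -> 0 < Rm j i) /\ (~ 0 < s i j -> Rm j i = 0).

Definition has_nonzero_principal_minor (R : realType) (m k : nat)
  (G : 'M[R]_m) : Prop :=
  exists f : 'I_k -> 'I_m, injective f /\ \det (mxsub f f G) != 0.

Definition crn_nondegenerate (R : realType) (m e : nat) (s st : 'M[R]_(m, e)) : Prop :=
  exists Rm : 'M[R]_(e, m), reactivity s Rm /\
    has_nonzero_principal_minor (m - nconserv s st) (stoich s st *m Rm).

(* k-Child-Selection: f enumerates kappa (injective), J is given via
   g = J o f (injective, enumerating E_kappa); each species f i is a reactant
   of its reaction g i. *)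
Definition child_selection (R : realType) (m e k : nat) (s : 'M[R]_(m, e))
  (f : 'I_k -> 'I_m) (g : 'I_k -> 'I_e) : Prop :=
  injective f /\ injective g /\ forall i, 0 < s (f i) (g i).

Definition cs_matrix (R : realType) (m e k : nat) (S : 'M[R]_(m, e))
  (f : 'I_k -> 'I_m) (g : 'I_k -> 'I_e) : 'M[R]_k :=
  \matrix_(i, l) S (f i) (g l).

(* Main.v *)
Require Import Defs.
From mathcomp Require Import all_boot all_order all_algebra.
From mathcomp Require Import reals.
From mathcomp Require Import fingroup perm.
Import Order.TTheory GRing.Theory Num.Theory.
Local Open Scope ring_scope.

Lemma exists_t (R : realType) k (C : 'M[R]_k) :
  exists2 t : R, 0 < t & \det (t%:M + C) != 0.
Proof.
pose p := char_poly (- C).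
have Hp : forall t : R, p.[t] = \det (t%:M + C).
  move=> t; rewrite -[p.[t]]/(horner_eval t p) /p /char_poly -det_map_mx; congr (\det _).
  apply/matrixP => i j; rewrite !mxE; change (('X *+ (i == j) - (- C i j)%:P).[t] = t *+ (i == j) + C i j).
  by rewrite hornerD hornerN hornerMn hornerX hornerC opprK.
have pn0 : p != 0 by rewrite -size_poly_eq0 size_char_poly.
pose rs := [seq (i.+1)%:R : R | i <- iota 0 k.+1].
have urs : uniq rs.
  rewrite map_inj_uniq ?iota_uniq // => i j /eqP; rewrite eqr_nat eqSS => /eqP //.
have : ~~ all (root p) rs.
  apply/negP => Hall; have := max_poly_roots pn0 Hall urs.
  by rewrite size_map size_iota size_char_poly ltnn.
case/allPn => t /mapP [i _ ->] Hr; exists (i.+1)%:R; first by rewrite ltr0Sn.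
by rewrite -Hp.
Qed.
Lemma det_mul_expand (R : comNzRingType) k e (X : 'M[R]_(k,e)) (Y : 'M[R]_(e,k)) :
  \det (X *m Y) = \sum_(h : {ffun 'I_k -> 'I_e})
     (\prod_i Y (h i) i) * \det (\matrix_(l, i) X l (h i)).
Proof.
rewrite -det_tr trmx_mul /(\det _).
transitivity (\sum_(sg : 'S_k) \sum_(h : {ffun 'I_k -> 'I_e})
   (-1) ^+ sg * \prod_i (Y (h i) i * X (sg i) (h i))).
  apply: eq_bigr => sg _; rewrite -big_distrr /=; congr (_ * _).
  rewrite -(bigA_distr_bigA (fun i j => Y j i * X (sg i) j)) /=.
  apply: eq_bigr => i _.
  by rewrite mxE; apply: eq_bigr => j _; rewrite !mxE.
rewrite exchange_big /=; apply: eq_bigr => h _.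
rewrite -det_tr /(\det _) big_distrr /=; apply: eq_bigr => sg _.
rewrite big_split /= mulrCA; congr (_ * _); congr (_ * _).
by apply: eq_bigr => i _; rewrite !mxE.
Qed.

Lemma forward (R : realType) m e k (s S : 'M[R]_(m, e)) (Rm : 'M[R]_(e, m))
  (f : 'I_k -> 'I_m) :
  reactivity s Rm -> injective f -> \det (mxsub f f (S *m Rm)) != 0 ->
  exists g, child_selection s f g /\ cs_matrix S f g \in unitmx.
Proof.
move=> HR finj; rewrite mxsub_mul det_mul_expand.
pose T := fun h : {ffun 'I_k -> 'I_e} =>
  (\prod_i colsub f Rm (h i) i) * \det (\matrix_(l, i) rowsub f S l (h i)).
case: (pickP (fun h => T h != 0)) => [h Hh _|H]; last first.
  by rewrite big1 ?eqxx // => h _; apply/eqP; move: (H h) => /= /negbFE.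
move: Hh; rewrite /T mulf_eq0 negb_or => /andP [Hp Hd].
have Hcs : cs_matrix S f h = (\matrix_(l, i) rowsub f S l (h i)).
  by apply/matrixP => i j; rewrite !mxE.
exists h; split; last by rewrite unitmxE unitfE Hcs.
split; first by [].
split.
  move=> i j Hij; apply/eqP; apply/negP => /negP nij; move: Hd.
  rewrite -det_tr (determinant_alternate nij) ?eqxx // => l.
  by rewrite !mxE Hij.
move=> i; move: Hp; rewrite (bigD1 i) //= mulf_eq0 negb_or => /andP [Hi _].
case: (boolP (0 < s (f i) (h i))) => // /negP Hn.
by move: Hi; rewrite mxE (proj2 (HR (h i) (f i)) Hn) eqxx.
Qed.

Lemma backward (R : realType) m e k (s S : 'M[R]_(m, e))
  (f : 'I_k -> 'I_m) (g : 'I_k -> 'I_e) :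
  child_selection s f g -> cs_matrix S f g \in unitmx ->
  exists Rm : 'M[R]_(e, m), reactivity s Rm /\
    exists f' : 'I_k -> 'I_m, injective f' /\ \det (mxsub f' f' (S *m Rm)) != 0.
Proof.
move=> [finj [ginj Hfg]] HA.
pose Q j i := [exists b, (f b == i) && (g b == j)].
pose P : 'M[R]_(e, m) := \matrix_(j, i) (Q j i)%:R.
pose Rm0 : 'M[R]_(e, m) := \matrix_(j, i) (if (0 < s i j) && ~~ Q j i then 1 else 0).
have HQ : forall j b, Q j (f b) = (g b == j).
  move=> j b; apply/existsP/idP => [[b' /andP [/eqP /finj -> //]]|Hb].
  by exists b; rewrite eqxx.
have HP : rowsub f S *m colsub f P = cs_matrix S f g.
  apply/matrixP => a b; rewrite !mxE (bigD1 (g b)) //= big1 ?addr0.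
    by rewrite !mxE HQ eqxx mulr1.
  by move=> j /negPf Hj; rewrite !mxE HQ eq_sym Hj mulr0.
pose A := cs_matrix S f g; pose B := rowsub f S *m colsub f Rm0.
have [t t0 Ht] := @exists_t _ _ (invmx A *m B).
exists (Rm0 + t *: P); split.
  move=> j i; rewrite !mxE; split.
    move=> ->; case: (boolP (Q j i)) => /= _; rewrite ?mulr1 ?mulr0 ?addr0 ?add0r //.
  move=> /negP Hn; rewrite (negPf Hn) /= add0r.
  case: (boolP (Q j i)) => [/existsP [b /andP [/eqP Hb /eqP Hg]]|]; last by rewrite mulr0.
  by move: (Hfg b); rewrite Hb Hg (negPf Hn).
exists f; split => //.
have -> : mxsub f f (S *m (Rm0 + t *: P)) = A *m (t%:M + invmx A *m B).
  rewrite [RHS]mulmxDr mul_mx_scalar mulKVmx // mxsub_mul /B /A -HP.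
  by rewrite linearD /= linearZ /= mulmxDr -scalemxAr addrC.
by rewrite (det_mulmx A) mulf_neq0 // -unitfE -unitmxE.
Qed.

Theorem mainTheorem9 (R : realType) (m e : nat) (s st : 'M[R]_(m, e)) :
  network_coeffs s st ->
  crn_nondegenerate s st <->
  exists (f : 'I_(m - nconserv s st) -> 'I_m)
         (g : 'I_(m - nconserv s st) -> 'I_e),
    child_selection s f g /\ cs_matrix (stoich s st) f g \in unitmx.
Proof.
move=> _; split.
  move=> [Rm [HR [f [finj Hd]]]].
  have [g Hg] := @forward _ _ _ _ _ _ _ _ HR finj Hd.
  by exists f, g.
move=> [f [g [Hcs HA]]].
have [Rm [HR [f' [Hf' Hd]]]] := @backward _ _ _ _ _ _ _ _ Hcs HA.
by exists Rm; split => //; exists f'.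
Qed.
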